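(* A set $\mathcal{K}\subseteq\wp(\mathcal{G})$ is coherent if and only if there is a non-empty set $\mathfrak{D}$ whose members are non-empty sets of coherent sets of desirable gambles, such that $\mathfrak{D}$ is downwards closed (for all $\mathbb{D}_1,\mathbb{D}_2\in\mathfrak{D}$ there is $\mathbb{D}\in\mathfrak{D}$ with $\mathbb{D}\subseteq\mathbb{D}_1\cap\mathbb{D}_2$), and for all $B\subseteq\mathcal{G}$: $B\in\mathcal{K}$ iff there is some $\mathbb{D}\in\mathfrak{D}$ such that for every $D\in\mathbb{D}$, $B\cap D\neq\emptyset$.
   Context: $\Omega$ is a non-empty set and $\mathcal{G}$ is the set of bounded functions $\Omega\to\mathbb{R}$. $f\geq g$ means pointwise $\geq$; $f\gneq g$ means $f\geq g$ and $f\neq g$; $\mathcal{G}_{\gneq 0}=\{f: f\gneq 0\}$. $\mathrm{posi}(B)=\{\sum_{i=1}^m\lambda_i h_i: m\geq1,\lambda_i>0,h_i\in B\}$. A set $D\subseteq\mathcal{G}$ is coherent if $0\notin D$; $\mathcal{G}_{\gneq0}\subseteq D$; $\lambda g\in D$ whenever $g\in D,\lambda>0$; and $f+g\in D$ whenever $f,g\in D$. A set $\mathcal{K}\subseteq\wp(\mathcal{G})$ is coherent if: (K$_\emptyset$) $\emptyset\notin\mathcal{K}$; (K$_0$) if $A\in\mathcal{K}$ then $A\setminus\{0\}\in\mathcal{K}$; (K$_{\gneq0}$) if $g\in\mathcal{G}_{\gneq0}$ then $\{g\}\in\mathcal{K}$; (K$_\supseteq$) if $A\in\mathcal{K}$ and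 $B\supseteq A$ then $B\in\mathcal{K}$; (K$_{\mathrm{Dom}}$) if $A\in\mathcal{K}$ and for each $g\in A$, $f_g$ is a gamble with $f_g\geq g$, then $\{f_g: g\in A\}\in\mathcal{K}$; (K$_{\mathrm{Add}}$) if $A_1,\ldots,A_n\in\mathcal{K}$ (finitely many) and for each $\langle g_1,\ldots,g_n\rangle\in A_1\times\cdots\times A_n$, $f_{\langle g_1,\ldots,g_n\rangle}$ is some member of $\mathrm{posi}(\{g_1,\ldots,g_n\})$, then $\{f_{\langle g_1,\ldots,g_n\rangle}:\langle g_1,\ldots,g_n\rangle\in A_1\times\cdots\times A_n\}\in\mathcal{K}$. *)

(* Defs.v *)
From Stdlib Require Import Reals.
Open Scope R_scope.
Set Implicit Arguments.

Section Gambles.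
Variable Omega : Type.

Definition bounded (f : Omega -> R) : Prop := exists M, forall w, Rabs (f w) <= M.

Definition gamble := {f : Omega -> R | bounded f}.
Definition gval (g : gamble) : Omega -> R := proj1_sig g.

Definition gset := gamble -> Prop.

Definition ggeq (f g : gamble) : Prop := forall w, gval g w <= gval f w.
Definition gzero (g : gamble) : Prop := forall w, gval g w = 0.
Definition gpos (g : gamble) : Prop := (forall w, 0 <= gval g w) /\ ~ gzero g.

Definition posi (B : gset) : gset := fun f =>
  exists (m : nat) (lam : nat -> R) (h : nat -> gamble),
    (1 <= m)%nat /\
    (forall i, (i < m)%nat -> 0 < lam i /\ B (h i)) /\
    forall w, gval f w = sum_f_R0 (fun i => lam i * gval (h i) w) (pred m).

Definition coherentD (D : gset) : Prop :=
  (forall g, D g -> ~ gzero g) /\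
  (forall g, gpos g -> D g) /\
  (forall g (l : R), D g -> 0 < l -> forall h, (forall w, gval h w = l * gval g w) -> D h) /\
  (forall f g, D f -> D g -> forall h, (forall w, gval h w = gval f w + gval g w) -> D h).

Definition set_empty (A : gset) : Prop := forall g, ~ A g.

Definition coherentK (K : gset -> Prop) : Prop :=
  (forall A, K A -> ~ set_empty A) /\
  (forall A, K A -> K (fun g => A g /\ ~ gzero g)) /\
  (forall g, gpos g -> K (fun h => h = g)) /\
  (forall A B, K A -> (forall g, A g -> B g) -> K B) /\
  (forall A (f : gamble -> gamble),
      K A -> (forall g, A g -> ggeq (f g) g) ->
      K (fun h => exists g, A g /\ h = f g)) /\
  (* K_Add: A_0..A_{n-1} in K; f chooses, for each tuple (g_0..g_{n-1}) in the
     product, an element of posi({g_0..g_{n-1}}); f depends only on the tuple. *)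
  (forall (n : nat) (A : nat -> gset) (f : (nat -> gamble) -> gamble),
      (forall i, (i < n)%nat -> K (A i)) ->
      (forall g g', (forall i, (i < n)%nat -> g i = g' i) -> f g = f g') ->
      (forall g, (forall i, (i < n)%nat -> A i (g i)) ->
         posi (fun h => exists i, (i < n)%nat /\ h = g i) (f g)) ->
      K (fun h => exists g, (forall i, (i < n)%nat -> A i (g i)) /\ h = f g)).

End Gambles.

(* Main.v *)
From Pilot Require Import Defs.
From Stdlib Require Import Reals.
From Stdlib Require Import Lra Lia Classical ClassicalEpsilon FunctionalExtensionality.
Open Scope R_scope.
Local Notation bounded := Pilot.Defs.bounded.

Lemma my_choice {X Y : Type} (P : X -> Y -> Prop) :
  (forall x, exists y, P x y) -> exists f, forall x, P x (f x).
Proof.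
  intro H. exists (fun x => proj1_sig (constructive_indefinite_description _ (H x))).
  intro x. exact (proj2_sig (constructive_indefinite_description _ (H x))).
Qed.

Section S.
Context {Omega : Type}.

Definition posiF (P : gset Omega) (e : Omega -> R) : Prop :=
  exists (m : nat) (lam : nat -> R) (h : nat -> gamble Omega),
    (1 <= m)%nat /\
    (forall i, (i < m)%nat -> 0 < lam i /\ P (h i)) /\
    forall w, e w = sum_f_R0 (fun i => lam i * gval (h i) w) (pred m).

Lemma gbounded (g : gamble Omega) : bounded (gval g).
Proof. exact (proj2_sig g). Qed.

Lemma bounded_lin (f g : Omega -> R) a b :
  bounded f -> bounded g -> bounded (fun w => a * f w + b * g w).
Proof.
  intros [M1 H1] [M2 H2]. exists (Rabs a * M1 + Rabs b * M2). intro w.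
  eapply Rle_trans. apply Rabs_triang. rewrite !Rabs_mult.
  apply Rplus_le_compat; apply Rmult_le_compat_l; auto using Rabs_pos.
Qed.

Lemma bounded_scale (f : Omega -> R) a : bounded f -> bounded (fun w => a * f w).
Proof.
  intros [M1 H1]. exists (Rabs a * M1). intro w. rewrite Rabs_mult.
  apply Rmult_le_compat_l; auto using Rabs_pos.
Qed.

Lemma zero_bounded : bounded (fun _ : Omega => 0).
Proof. exists 0. intro w. rewrite Rabs_R0. lra. Qed.

Definition zg : gamble Omega := exist _ (fun _ => 0) zero_bounded.

Lemma bounded_sum (lam : nat -> R) (h : nat -> gamble Omega) k :
  bounded (fun w => sum_f_R0 (fun i => lam i * gval (h i) w) k).
Proof.
  induction k; simpl.
  - destruct (gbounded (h 0%nat)) as [M HM]. exists (Rabs (lam 0%nat) * M).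
    intro w. rewrite Rabs_mult. apply Rmult_le_compat_l; auto using Rabs_pos.
  - destruct IHk as [M1 H1]. destruct (gbounded (h (S k))) as [M2 H2].
    exists (M1 + Rabs (lam (S k)) * M2). intro w. eapply Rle_trans. apply Rabs_triang.
    rewrite Rabs_mult. apply Rplus_le_compat; auto. apply Rmult_le_compat_l; auto using Rabs_pos.
Qed.

Lemma posiF_bounded P e : posiF P e -> bounded e.
Proof.
  intros (m & lam & h & _ & _ & He). destruct (bounded_sum lam h (pred m)) as [M HM].
  exists M. intro w. rewrite He. apply HM.
Qed.

Lemma posiF_snoc P e1 e (h : gamble Omega) l :
  posiF P e1 -> P h -> 0 < l -> (forall w, e w = e1 w + l * gval h w) -> posiF P e.
Proof.
  intros (m & lam & hs & Hm & Hv & He) Ph Hl Hee.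
  destruct m as [|k]; [lia|].
  exists (S (S k)), (fun i => if Nat.eqb i (S k) then l else lam i),
         (fun i => if Nat.eqb i (S k) then h else hs i).
  split; [lia|]. split.
  - intros i Hi. destruct (Nat.eqb_spec i (S k)); auto. apply Hv. lia.
  - intro w. rewrite Hee, He. simpl pred. rewrite tech5. cbv beta.
    rewrite Nat.eqb_refl. f_equal. apply sum_eq. intros i Hi.
    destruct (Nat.eqb_spec i (S k)); [lia|reflexivity].
Qed.

Lemma posiF_add P e1 e2 e :
  posiF P e1 -> posiF P e2 -> (forall w, e w = e1 w + e2 w) -> posiF P e.
Proof.
  intros H1 (m & lam & hs & Hm & Hv & He) Hee.
  assert (G: forall k, (k < m)%nat -> forall e', (forall w, e' w = e1 w +
     sum_f_R0 (fun i => lam i * gval (hs i) w) k) -> posiF P e').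
  { induction k; intros Hk e' He'.
    - apply (posiF_snoc P e1 e' (hs 0%nat) (lam 0%nat) H1); [apply Hv; lia | apply Hv; lia | ].
      intro w; rewrite He'. simpl. ring.
    - apply (posiF_snoc P (fun w => e1 w + sum_f_R0 (fun i => lam i * gval (hs i) w) k) e' (hs (S k)) (lam (S k))).
      + apply IHk; [lia| intro; reflexivity].
      + apply Hv; lia.
      + apply Hv; lia.
      + intro w. rewrite He', tech5. ring. }
  apply (G (pred m)); [lia|]. intro w. rewrite Hee, He. reflexivity.
Qed.

Lemma sum_scale (f : nat -> R) l k :
  sum_f_R0 (fun i => l * f i) k = l * sum_f_R0 f k.
Proof. induction k; simpl; [ring| rewrite IHk; ring]. Qed.

Lemma posiF_scale P e1 l : posiF P e1 -> 0 < l -> posiF P (fun w => l * e1 w).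
Proof.
  intros (m & lam & hs & Hm & Hv & He) Hl.
  exists m, (fun i => l * lam i), hs. split; [auto|]. split.
  - intros i Hi. destruct (Hv i Hi). split; auto. apply Rmult_lt_0_compat; auto.
  - intro w. rewrite He. rewrite <- sum_scale. apply sum_eq. intros; ring.
Qed.

Lemma posiF_mono (P Q : gset Omega) e : (forall h, P h -> Q h) -> posiF P e -> posiF Q e.
Proof.
  intros HPQ (m & lam & hs & Hm & Hv & He). exists m, lam, hs. split; auto. split; auto.
  intros i Hi. destruct (Hv i Hi); auto.
Qed.

Lemma posiF_single (P : gset Omega) h : P h -> posiF P (gval h).
Proof.
  intro Ph. exists 1%nat, (fun _ => 1), (fun _ => h). split; [lia|]. split.
  - intros; split; auto; lra.
  - intro w. simpl. ring.
Qed.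

Lemma posi_in_D (D P : gset Omega) : coherentD D -> (forall h, P h -> D h) ->
  forall e : gamble Omega, posiF P (gval e) -> D e.
Proof.
  intros (C1 & C2 & C3 & C4) HPD e (m & lam & hs & Hm & Hv & He).
  assert (G : forall k, (k < m)%nat -> forall e' : gamble Omega,
     (forall w, gval e' w = sum_f_R0 (fun i => lam i * gval (hs i) w) k) -> D e').
  { induction k; intros Hk e' He'.
    - destruct (Hv 0%nat ltac:(lia)) as [Hl Hp].
      apply (C3 (hs 0%nat) (lam 0%nat) (HPD _ Hp) Hl). intro w. rewrite He'. reflexivity.
    - destruct (Hv (S k) ltac:(lia)) as [Hl Hp].
      set (p := exist _ (fun w => 1 * gval e' w + - lam (S k) * gval (hs (S k)) w)
                 (bounded_lin _ _ 1 (- lam (S k)) (gbounded e') (gbounded (hs (S k))))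
                 : gamble Omega).
      set (q := exist _ (fun w => lam (S k) * gval (hs (S k)) w)
                 (bounded_scale _ (lam (S k)) (gbounded (hs (S k)))) : gamble Omega).
      assert (Dp : D p).
      { apply IHk; [lia|]. intro w. simpl. rewrite He', tech5. ring. }
      assert (Dq : D q).
      { apply (C3 (hs (S k)) (lam (S k)) (HPD _ Hp) Hl). intro w. reflexivity. }
      apply (C4 p q Dp Dq). intro w. simpl. ring. }
  apply (G (pred m)); [lia|exact He].
Qed.

Lemma main_lemma (K : gset Omega -> Prop) : coherentK K ->
  forall (n : nat) (A : nat -> gset Omega) (B : gset Omega),
  (forall i, (i < n)%nat -> K (A i)) -> ~ K B ->
  exists D, coherentD D /\ (forall i, (i < n)%nat -> exists g, A i g /\ D g) /\
    (forall g, B g -> ~ D g).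
Proof.
  intros (Kem & K0 & Kpos & Ksup & Kdom & Kadd) n A B HA HB.
  assert (Bnp : forall b, B b -> ~ gpos b).
  { intros b Bb Hp. apply HB. apply (Ksup _ _ (Kpos b Hp)). intros g ->. exact Bb. }
  set (A' := fun i (g : gamble Omega) => A i g /\ ~ gzero g).
  assert (HA' : forall i, (i < n)%nat -> K (A' i)) by (intros; apply K0, HA; auto).
  set (sel := fun (g : nat -> gamble Omega) => forall i, (i < n)%nat -> A' i (g i)).
  set (Pg := fun (g : nat -> gamble Omega) (h : gamble Omega) =>
               exists i, (i < n)%nat /\ h = g i).
  set (Dg := fun g (h : gamble Omega) => ~ gzero h /\ ((forall w, 0 <= gval h w) \/
               exists e, posiF (Pg g) e /\ forall w, e w <= gval h w)).
  set (bad := fun g => exists e, posiF (Pg g) e /\ forall w, e w <= 0).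
  assert (Hcoh : forall g, ~ bad g -> coherentD (Dg g)).
  { intros g Hnb. split; [|split; [|split]].
    - intros h [Hnz _]; exact Hnz.
    - intros h [Hge Hnz]; split; auto.
    - intros h l [Hnz Hc] Hl h' Hh'. split.
      + intro Hz. apply Hnz. intro w. specialize (Hz w). rewrite Hh' in Hz.
        apply Rmult_integral in Hz. destruct Hz; [lra|auto].
      + destruct Hc as [Hc | [e [He Hle]]].
        * left; intro w; rewrite Hh'; apply Rmult_le_pos; [lra| auto].
        * right; exists (fun w => l * e w); split. apply posiF_scale; auto.
          intros w; rewrite Hh'; apply Rmult_le_compat_l; [lra|auto].
    - intros f1 f2 [Hnz1 Hc1] [Hnz2 Hc2] h Hh.
      destruct Hc1 as [Hc1 | [e1 [He1 Hle1]]]; destruct Hc2 as [Hc2 | [e2 [He2 Hle2]]].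
      + split.
        * intro Hz; apply Hnz1; intro w; specialize (Hz w); specialize (Hh w);
          specialize (Hc1 w); specialize (Hc2 w); lra.
        * left; intro w; rewrite Hh; specialize (Hc1 w); specialize (Hc2 w); lra.
      + split.
        * intro Hz. apply Hnb. exists e2. split; auto. intro w. specialize (Hz w);
          specialize (Hh w); specialize (Hc1 w); specialize (Hle2 w); lra.
        * right; exists e2; split; auto. intro w; rewrite Hh; specialize (Hc1 w);
          specialize (Hle2 w); lra.
      + split.
        * intro Hz. apply Hnb. exists e1. split; auto. intro w. specialize (Hz w);
          specialize (Hh w); specialize (Hc2 w); specialize (Hle1 w); lra.
        * right; exists e1; split; auto. intro w; rewrite Hh; specialize (Hc2 w);
          specialize (Hle1 w); lra.
      + assert (He : posiF (Pg g) (fun w => e1 w + e2 w)) by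
          (apply (posiF_add _ e1 e2); auto).
        split.
        * intro Hz. apply Hnb. exists (fun w => e1 w + e2 w). split; auto. intro w.
          specialize (Hz w); specialize (Hh w); specialize (Hle1 w); specialize (Hle2 w); lra.
        * right; exists (fun w => e1 w + e2 w); split; auto. intro w; rewrite Hh;
          specialize (Hle1 w); specialize (Hle2 w); lra. }
  destruct (classic (exists g, sel g /\ ~ bad g /\ forall b, B b -> ~ Dg g b))
    as [[g [Hs [Hnb Hdis]]] | Hno].
  - exists (Dg g). split; [auto|]. split; [|exact Hdis].
    intros i Hi. exists (g i). destruct (Hs i Hi) as [HAi Hnz]. split; [exact HAi|].
    split; [exact Hnz|]. right. exists (gval (g i)). split.
    + apply posiF_single. exists i; auto.
    + intros; lra.
  - exfalso.
    assert (HQ : forall g, sel g -> exists e t : gamble Omega, posiF (Pg g) (gval e) /\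
              (forall w, gval e w <= gval t w) /\ (B t \/ gzero t)).
    { intros g Hs.
      destruct (classic (bad g)) as [Hb | Hnb].
      - destruct Hb as [e [He Hle]]. exists (exist _ e (posiF_bounded _ _ He)), zg.
        split; [exact He|]. split.
        + intro w; simpl; apply Hle.
        + right; intro w; reflexivity.
      - assert (Hx: exists b, B b /\ Dg g b).
        { apply NNPP; intro Hx. apply Hno. exists g. split; [auto|split; auto].
          intros b Bb Db. apply Hx; eauto. }
        destruct Hx as [b [Bb [Hnz [Hge | [e [He Hle]]]]]].
        + exfalso. apply (Bnp b Bb). split; auto.
        + exists (exist _ e (posiF_bounded _ _ He)), b. split; [exact He|].
          split; [exact Hle| left; exact Bb]. }
    assert (HF : forall g, exists p : gamble Omega * gamble Omega, sel g ->
       posiF (Pg g) (gval (fst p)) /\ (forall w, gval (fst p) w <= gval (snd p) w) /\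
       (B (snd p) \/ gzero (snd p))).
    { intro g. destruct (classic (sel g)) as [Hs|Hs].
      - destruct (HQ g Hs) as (e & t & H). exists (e,t). intros _; exact H.
      - exists (zg, zg). intro; contradiction. }
    destruct (my_choice _ HF) as [F HFs].
    set (nz := fun (g : nat -> gamble Omega) i => if Nat.ltb i n then g i else zg).
    assert (Hnzsel : forall g, sel g -> sel (nz g)).
    { intros g Hs i Hi. unfold nz. destruct (Nat.ltb_spec i n); [auto|lia]. }
    assert (Hnzeq : forall g g', (forall i, (i<n)%nat -> g i = g' i) -> nz g = nz g').
    { intros g g' H. apply functional_extensionality. intro i. unfold nz.
      destruct (Nat.ltb_spec i n); auto. }
    set (f := fun g => fst (F (nz g))).
    assert (HK1 : K (fun h => exists g, (forall i, (i<n)%nat -> A' i (g i)) /\ h = f g)).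
    { apply Kadd.
      - exact HA'.
      - intros g g' H. unfold f. rewrite (Hnzeq g g' H). reflexivity.
      - intros g Hs. destruct (HFs (nz g) (Hnzsel g Hs)) as [Hp _].
        change (posiF (fun h => exists i, (i < n)%nat /\ h = g i) (gval (f g))).
        revert Hp. apply posiF_mono. intros h [i [Hi ->]]. exists i. split; auto.
        unfold nz. destruct (Nat.ltb_spec i n); [reflexivity|lia]. }
    set (S1 := fun h => exists g, (forall i, (i<n)%nat -> A' i (g i)) /\ h = f g) in HK1.
    assert (HT : forall e : gamble Omega, exists t, S1 e ->
               (forall w, gval e w <= gval t w) /\ (B t \/ gzero t)).
    { intro e. destruct (classic (S1 e)) as [[g [Hs ->]] | Hn].
      - exists (snd (F (nz g))). intros _. destruct (HFs (nz g) (Hnzsel g Hs)) as [_ H].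
        exact H.
      - exists zg. intro; contradiction. }
    destruct (my_choice _ HT) as [T HTs].
    pose proof (Kdom _ T HK1 (fun e He => proj1 (HTs e He))) as HK2.
    pose proof (K0 _ HK2) as HK3.
    apply HB. apply (Ksup _ _ HK3). intros h [[e [He ->]] Hnz].
    destruct (proj2 (HTs e He)) as [Hb|Hz]; [exact Hb| contradiction].
Qed.

End S.

Theorem mainTheorem10 (Omega : Type) (w0 : Omega) (K : gset Omega -> Prop) :
  coherentK K <->
  exists (DD : (gset Omega -> Prop) -> Prop),
    (exists Db, DD Db) /\
    (forall Db, DD Db -> (exists D, Db D) /\ (forall D, Db D -> coherentD D)) /\
    (forall D1 D2, DD D1 -> DD D2 ->
       exists D, DD D /\ (forall E, D E -> D1 E /\ D2 E)) /\
    (forall B : gset Omega,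
       K B <-> exists Db, DD Db /\ forall D, Db D -> exists g, B g /\ D g).
Proof.
  split.
  - intros HK. pose proof HK as (Kem & K0 & Kpos & Ksup & Kdom & Kadd).
    exists (fun Db => exists n (A : nat -> gset Omega), (forall i, (i<n)%nat -> K (A i)) /\
      forall D, Db D <-> (coherentD D /\ forall i, (i<n)%nat -> exists g, A i g /\ D g)).
    split; [|split; [|split]].
    + exists (fun D => coherentD D /\ forall i, (i < 0)%nat -> exists g,
          (fun (_ : nat) (_ : gamble Omega) => False) i g /\ D g).
      exists 0%nat, (fun _ _ => False). split; [intros; lia | intro; reflexivity].
    + intros Db (n & A & HA & HDb). split.
      * destruct (main_lemma K HK n A (fun _ => False) HA) as (D & Hc & Hm & _).
        { intro HKe. apply (Kem _ HKe). intros g Hg; exact Hg. }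
        exists D. apply HDb. auto.
      * intros D HD. apply HDb in HD. tauto.
    + intros D1 D2 (n1 & A1 & HA1 & H1) (n2 & A2 & HA2 & H2).
      set (A := fun i => if Nat.ltb i n1 then A1 i else A2 (i - n1)%nat).
      exists (fun D => coherentD D /\ forall i, (i < n1 + n2)%nat -> exists g, A i g /\ D g).
      split.
      * exists (n1+n2)%nat, A. split.
        -- intros i Hi. unfold A. destruct (Nat.ltb_spec i n1).
           ++ apply HA1; auto.
           ++ apply HA2; lia.
        -- intro; reflexivity.
      * intros E [Hc HE]. split.
        -- apply H1. split; auto. intros i Hi. destruct (HE i ltac:(lia)) as [g Hg].
           exists g. unfold A in Hg. destruct (Nat.ltb_spec i n1); [exact Hg| lia].
        -- apply H2. split; auto. intros i Hi. destruct (HE (n1 + i)%nat ltac:(lia)) as [g Hg].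
           exists g. unfold A in Hg. destruct (Nat.ltb_spec (n1+i) n1); [lia|].
           replace (n1 + i - n1)%nat with i in Hg by lia. exact Hg.
    + intro B. split.
      * intro HB. exists (fun D => coherentD D /\ forall i, (i<1)%nat -> exists g,
            (fun (_ : nat) => B) i g /\ D g). split.
        -- exists 1%nat, (fun _ => B). split; [auto| intro; reflexivity].
        -- intros D [_ HD]. apply (HD 0%nat). lia.
      * intros (Db & (n & A & HA & HDb) & Hf). apply NNPP. intro HnB.
        destruct (main_lemma K HK n A B HA HnB) as (D & Hc & Hm & Hd).
        destruct (Hf D) as [g [Bg Dg]].
        { apply HDb; auto. }
        exact (Hd g Bg Dg).
  - intros (DD & [Db0 HDb0] & Hne & Hdown & Hrep).
    assert (Kf : forall A, K A -> exists Db, DD Db /\ forall D, Db D -> exists g, A g /\ D g)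
      by (intros; apply Hrep; auto).
    assert (Kb : forall A Db, DD Db -> (forall D, Db D -> exists g, A g /\ D g) -> K A)
      by (intros; apply Hrep; eauto).
    split; [|split; [|split; [|split; [|split]]]].
    + intros A HA Hemp. destruct (Kf A HA) as [Db [HDb Hf]].
      destruct (Hne Db HDb) as [[D HD] _]. destruct (Hf D HD) as [g [Ag _]].
      exact (Hemp g Ag).
    + intros A HA. destruct (Kf A HA) as [Db [HDb Hf]]. apply (Kb _ Db HDb).
      intros D HD. destruct (Hf D HD) as [g [Ag Dg]]. exists g.
      destruct (proj2 (Hne Db HDb) D HD) as [H1 _]. split; [split; auto|auto].
    + intros g Hg. apply (Kb _ Db0 HDb0). intros D HD. exists g. split; [reflexivity|].
      destruct (proj2 (Hne _ HDb0) D HD) as [_ [H2 _]]. auto.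
    + intros A B HA HAB. destruct (Kf A HA) as [Db [HDb Hf]]. apply (Kb _ Db HDb).
      intros D HD. destruct (Hf D HD) as [g [Ag Dg]]. exists g; auto.
    + intros A f HA Hf. destruct (Kf A HA) as [Db [HDb HF]]. apply (Kb _ Db HDb).
      intros D HD. destruct (HF D HD) as [g [Ag Dg]]. exists (f g). split.
      { exists g; auto. }
      destruct (proj2 (Hne _ HDb) D HD) as (C1 & C2 & C3 & C4).
      destruct (classic (forall w, gval (f g) w = gval g w)) as [Heq | Hneq].
      * apply (C3 g 1 Dg ltac:(lra)). intro w; rewrite Heq; ring.
      * set (d := exist _ (fun w => 1 * gval (f g) w + -1 * gval g w)
             (bounded_lin _ _ 1 (-1) (gbounded _) (gbounded _)) : gamble Omega).
        assert (Hd : D d).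
        { apply C2. split.
          - intro w. simpl. specialize (Hf g Ag w). lra.
          - intro Hz. apply Hneq. intro w. specialize (Hz w). simpl in Hz. lra. }
        apply (C4 g d Dg Hd (f g)). intro w; simpl; ring.
    + intros n A f HA Hfd Hpos.
      assert (Hcommon: forall k, (k <= n)%nat -> exists Db, DD Db /\
                 forall D, Db D -> forall i, (i<k)%nat -> exists g, A i g /\ D g).
      { induction k; intros Hk.
        - exists Db0; split; auto; intros; lia.
        - destruct (IHk ltac:(lia)) as [Db1 [H1 F1]].
          destruct (Kf _ (HA k ltac:(lia))) as [Db2 [H2 F2]].
          destruct (Hdown _ _ H1 H2) as [Db [HDb Hsub]]. exists Db; split; auto.
          intros D HD i Hi. destruct (Hsub D HD) as [S1 S2].
          destruct (Nat.eq_dec i k) as [->|].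
          + auto.
          + apply F1; auto; lia. }
      destruct (Hcommon n (Nat.le_refl n)) as [Db [HDb Hf]]. apply (Kb _ Db HDb).
      intros D HD.
      assert (Hch: forall i, exists g, (i < n)%nat -> A i g /\ D g).
      { intro i. destruct (Compare_dec.lt_dec i n) as [l|l].
        - destruct (Hf D HD i l) as [g Hg]; exists g; auto.
        - exists zg; intro; lia. }
      destruct (my_choice _ Hch) as [g Hg].
      exists (f g). split.
      { exists g; split; auto; intros; apply Hg; auto. }
      apply (posi_in_D D (fun h => exists i, (i<n)%nat /\ h = g i)).
      * exact (proj2 (Hne _ HDb) D HD).
      * intros h [i [Hi ->]]. apply Hg; auto.
      * apply Hpos. intros; apply Hg; auto.
Qed.
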